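(* Let $f$ be a continuous real-valued function defined on an interval $I$. Then $f$ is convex if and only if \[ \frac{1}{|J|}\int_J f(x)\,\mathrm{d}x\geq\frac{1}{|K|}\int_K f(x)\,\mathrm{d}x \] whenever $K\subset J$ are two compact subintervals of $I$ of positive length having the same midpoint. Here $|J|$, $|K|$ denote the lengths of the intervals. *)

(* Defs.v *)
From Stdlib Require Import Reals.
From Coquelicot Require Import Coquelicot.
Open Scope R_scope.

Definition is_interval (I : R -> Prop) : Prop :=
  forall x y z, I x -> I z -> x <= y <= z -> I y.

Definition continuous_on_set (I : R -> Prop) (f : R -> R) : Prop :=
  forall x, I x -> filterlim f (within I (locally x)) (locally (f x)).

Definition convex_on (I : R -> Prop) (f : R -> R) : Prop :=
  forall x y t, I x -> I y -> 0 <= t <= 1 ->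
    f (t * x + (1 - t) * y) <= t * f x + (1 - t) * f y.

Definition mean (f : R -> R) (a b : R) : R := RInt f a b / (b - a).

(* Main.v *)
Require Import Defs.
From Stdlib Require Import Reals Lra.
From Coquelicot Require Import Coquelicot.
Open Scope R_scope.

Definition cl (p q u : R) := Rmax p (Rmin q u).

Lemma cl_bounds p q u : p <= q -> p <= cl p q u <= q.
Proof. intros; unfold cl, Rmax, Rmin; repeat destruct Rle_dec; lra. Qed.

Lemma cl_id p q u : p <= u <= q -> cl p q u = u.
Proof. intros; unfold cl, Rmax, Rmin; repeat destruct Rle_dec; lra. Qed.

Lemma cl_lip p q u v : p <= q -> Rabs (cl p q u - cl p q v) <= Rabs (u - v).
Proof.
  intros. apply Rabs_le.
  destruct (Rle_dec 0 (u - v)).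
  - rewrite Rabs_right by lra. unfold cl, Rmax, Rmin; repeat destruct Rle_dec; lra.
  - rewrite Rabs_left1 by lra. unfold cl, Rmax, Rmin; repeat destruct Rle_dec; lra.
Qed.

Lemma cl_cont (I : R -> Prop) f p q : is_interval I -> continuous_on_set I f ->
  p <= q -> I p -> I q -> forall x, continuous (fun u => f (cl p q u)) x.
Proof.
  intros HI Hf Hpq Ip Iq x.
  assert (Icl : forall u, I (cl p q u)).
  { intro u. apply (HI p _ q); auto. apply cl_bounds; auto. }
  unfold continuous.
  eapply filterlim_comp; [| apply (Hf _ (Icl x))].
  intros P [eps HP]. exists eps. intros u Hu. apply HP; [| apply Icl].
  change (Rabs (cl p q u - cl p q x) < eps).
  change (Rabs (u - x) < eps) in Hu.
  eapply Rle_lt_trans; [apply cl_lip|]; auto.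
Qed.

Lemma lin_cont (G : R -> R) t c : (forall x, continuous G x) ->
  forall y, continuous (fun y => G (t * y + c)) y.
Proof.
  intros HG y. apply (continuous_comp (fun y => t * y + c) G).
  apply (@ex_derive_continuous R_AbsRing R_NormedModule). auto_derive. auto. apply HG.
Qed.

Lemma lin_RInt (G : R -> R) t c : (forall x, continuous G x) ->
  RInt (fun y => G (t * y + c)) (-1) 1 * t = RInt G (c - t) (c + t).
Proof.
  intros HG.
  assert (H := RInt_comp_lin G t c (-1) 1).
  replace (t * -1 + c) with (c - t) in H by ring.
  replace (t * 1 + c) with (c + t) in H by ring.
  rewrite <- H. 2: apply ex_RInt_continuous; auto.
  rewrite RInt_scal. unfold scal; simpl; unfold mult; simpl. ring.
  apply ex_RInt_continuous. intros; apply lin_cont; auto.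
Qed.

Lemma mean_sym (G : R -> R) c t : (forall x, continuous G x) -> t <> 0 ->
  mean G (c - t) (c + t) = RInt (fun y => G (t * y + c) + G (- t * y + c)) (-1) 1 / 4.
Proof.
  intros HG Ht. unfold mean.
  assert (E : RInt (fun y => G (t * y + c) + G (- t * y + c)) (-1) 1
     = RInt (fun y => G (t * y + c)) (-1) 1 + RInt (fun y => G (- t * y + c)) (-1) 1).
  { refine (RInt_plus (V:=R_CompleteNormedModule) (fun y => G (t * y + c)) (fun y => G (- t * y + c)) (-1) 1 _ _); apply ex_RInt_continuous; intros; apply lin_cont; auto. }
  rewrite E.
  assert (E1 := lin_RInt G t c HG).
  assert (E2 := lin_RInt G (- t) c HG).
  replace (c - - t) with (c + t) in E2 by ring.
  replace (c + - t) with (c - t) in E2 by ring.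
  rewrite <- (opp_RInt_swap G (c - t) (c + t)) in E2 by (apply ex_RInt_continuous; auto; intros; apply HG).
  change (opp (RInt G (c - t) (c + t))) with (- RInt G (c - t) (c + t)) in E2.
  replace (c + t - (c - t)) with (2 * t) by ring.
  apply (Rmult_eq_reg_r t); [| auto].
  field_simplify; auto. rewrite <- E1. 
  assert (RInt (fun y => G (- t * y + c)) (-1) 1 * t = RInt G (c - t) (c + t)) by lra.
  lra.
Qed.

Lemma fwd (I : R -> Prop) f c r s : is_interval I -> continuous_on_set I f -> convex_on I f ->
  0 < s -> s <= r -> I (c - r) -> I (c + r) ->
  mean f (c - r) (c + r) >= mean f (c - s) (c + s).
Proof.
  intros HI Hf Hc Hs Hsr Ip Iq.
  set (G := fun u => f (cl (c - r) (c + r) u)).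
  assert (HG : forall x, continuous G x) by (apply cl_cont with I; auto; lra).
  assert (Em : forall t, 0 < t <= r -> mean f (c - t) (c + t) = mean G (c - t) (c + t)).
  { intros t Ht. unfold mean. f_equal. apply RInt_ext. intros x Hx.
    rewrite Rmin_left in Hx by lra. rewrite Rmax_right in Hx by lra.
    unfold G. rewrite cl_id; auto; lra. }
  rewrite !Em by lra. rewrite !mean_sym by (auto; lra).
  apply Rle_ge. apply Rmult_le_compat_r; [lra|].
  apply RInt_le; [lra | | | ].
  1,2: apply (ex_RInt_continuous (V:=R_CompleteNormedModule)); intros; apply (continuous_plus (fun y => G (_ * y + c)) (fun y => G (_ * y + c))); apply lin_cont; auto.
  intros y Hy. unfold G.
  assert (B : forall t, 0 < t <= r -> forall e, -1 <= e <= 1 -> c - r <= t * e + c <= c + r).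
  { intros t Ht e He. split; nra. }
  rewrite !cl_id; try (apply B; lra).
  2,3: split; nra.
  assert (Ib : forall e, -1 <= e <= 1 -> forall t, 0 < t <= r -> I (t * e + c)).
  { intros e He t Ht. apply (HI (c - r) _ (c + r)); auto. }
  set (l := (1 + s / r) / 2).
  assert (Hsr' : 0 < s / r <= 1).
  { split; [apply Rdiv_lt_0_compat; lra|].
    apply Rmult_le_reg_r with r; [lra|]. unfold Rdiv. rewrite Rmult_assoc, Rinv_l; lra. }
  assert (Hl : 0 <= l <= 1) by (unfold l; lra).
  assert (I1 : I (r * y + c)) by (apply Ib; lra).
  assert (I2 : I (- r * y + c)) by (replace (- r * y) with (r * (- y)) by ring; apply Ib; lra).
  assert (H1 := Hc _ _ l I1 I2 Hl).
  assert (H2 := Hc _ _ l I2 I1 Hl).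
  replace (l * (r * y + c) + (1 - l) * (- r * y + c)) with (s * y + c) in H1 by (unfold l; field; lra).
  replace (l * (- r * y + c) + (1 - l) * (r * y + c)) with (- s * y + c) in H2 by (unfold l; field; lra).
  assert (E : l * f (r * y + c) + (1 - l) * f (- r * y + c) + (l * f (- r * y + c) + (1 - l) * f (r * y + c))
     = f (r * y + c) + f (- r * y + c)) by ring.
  lra.
Qed.

Lemma cont_eps (G : R -> R) x eps : continuous G x -> 0 < eps ->
  exists d, 0 < d /\ forall u, Rabs (u - x) < d -> Rabs (G u - G x) < eps.
Proof.
  intros H He.
  destruct (H (fun y => Rabs (y - G x) < eps)) as [d Hd].
  { exists (mkposreal eps He). intros y Hy. exact Hy. }
  exists d. split; [apply cond_pos|]. intros u Hu. apply (Hd u). exact Hu.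
Qed.

Lemma split_bound (h : R -> R) p m q K1 K2 : (forall x, continuous h x) -> p <= m <= q ->
  (forall u, p <= u <= m -> h u <= K1) -> (forall u, m <= u <= q -> h u <= K2) ->
  RInt h p q <= K1 * (m - p) + K2 * (q - m).
Proof.
  intros Hh Hm H1 H2.
  assert (Ex : forall a b, ex_RInt h a b) by (intros; apply (ex_RInt_continuous (V:=R_CompleteNormedModule)); auto).
  rewrite <- (RInt_Chasles h p m q) by auto.
  change (plus (RInt h p m) (RInt h m q)) with (RInt h p m + RInt h m q).
  assert (A : RInt h p m <= RInt (fun _ => K1) p m).
  { apply RInt_le; try lra; auto. apply ex_RInt_const. intros; apply H1; lra. }
  assert (B : RInt h m q <= RInt (fun _ => K2) m q).
  { apply RInt_le; try lra; auto. apply ex_RInt_const. intros; apply H2; lra. }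
  rewrite !RInt_const in A, B. unfold scal in A, B; simpl in A, B; unfold mult in A, B; simpl in A, B.
  lra.
Qed.

Lemma lower_bound (h : R -> R) p q K : (forall x, continuous h x) -> p <= q ->
  (forall u, p <= u <= q -> K <= h u) -> K * (q - p) <= RInt h p q.
Proof.
  intros Hh Hpq H.
  assert (A : RInt (fun _ => K) p q <= RInt h p q).
  { apply RInt_le; try lra. apply ex_RInt_const. apply (ex_RInt_continuous (V:=R_CompleteNormedModule)); auto.
    intros; apply H; lra. }
  rewrite RInt_const in A. unfold scal in A; simpl in A; unfold mult in A; simpl in A. lra.
Qed.

Lemma affine_mean (A B : R) c t : t <> 0 ->
  RInt (fun u => A + B * u) (c - t) (c + t) = 2 * t * (A + B * c).
Proof.
  intros Ht.
  assert (HL : forall x, continuous (fun u => A + B * u) x).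
  { intros x. apply (@ex_derive_continuous R_AbsRing R_NormedModule). auto_derive. auto. }
  assert (E := mean_sym _ c t HL Ht).
  rewrite (RInt_ext _ (fun _ => 2 * (A + B * c))) in E.
  2: { intros x _. change ((A + B * (t * x + c)) + (A + B * (- t * x + c)) = 2 * (A + B * c)). ring. }
  rewrite RInt_const in E. unfold scal in E; simpl in E; unfold mult in E; simpl in E.
  unfold mean in E. replace (c + t - (c - t)) with (2 * t) in E by ring.
  assert (E' : RInt (fun u => A + B * u) (c - t) (c + t) / (2 * t) = (1 - -1) * (2 * (A + B * c)) / 4) by exact E.
  assert (Aux : forall X : R, X / (2*t) = (1 - -1) * (2*(A+B*c))/4 -> X = 2*t*(A+B*c)).
  { intros X HX; replace X with (X/(2*t)*(2*t)) by (field; auto); rewrite HX; field. }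
  apply Aux; exact E'.
Qed.

Lemma bwd_core (I : R -> Prop) f a b : is_interval I -> continuous_on_set I f ->
  (forall c r s, 0 < s -> s <= r -> I (c - r) -> I (c + r) ->
      mean f (c - r) (c + r) >= mean f (c - s) (c + s)) ->
  a < b -> I a -> I b ->
  forall z, a <= z <= b -> f z <= f a + (f b - f a) / (b - a) * (z - a).
Proof.
  intros HI Hf Hyp Hab Ia Ib z Hz.
  set (beta := (f b - f a) / (b - a)).
  set (A := f a - beta * a).
  assert (EL : forall u, f a + beta * (u - a) = A + beta * u) by (intros; unfold A; ring).
  rewrite EL.
  set (G := fun u => f (cl a b u) - (A + beta * u)).
  assert (HG : forall x, continuous G x).
  { intros x. apply (continuous_minus (fun u => f (cl a b u)) (fun u => A + beta * u)).
    apply cl_cont with I; auto; lra.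
    apply (@ex_derive_continuous R_AbsRing R_NormedModule). auto_derive. auto. }
  assert (Ga : G a = 0).
  { unfold G. rewrite cl_id by lra. unfold A. ring. }
  assert (Gb : G b = 0).
  { unfold G. rewrite cl_id by lra. unfold A, beta. field. lra. }
  apply Rnot_lt_le. intro Hlt.
  assert (Gz : 0 < G z) by (unfold G; rewrite cl_id by lra; lra).
  destruct (continuity_ab_maj G a b) as [x0 [Hmax Hx0]]; [lra| |].
  { intros; apply continuity_pt_filterlim; apply HG. }
  set (M := G x0).
  assert (HM : 0 < M) by (unfold M; specialize (Hmax z Hz); lra).
  assert (Hx0' : a < x0 < b).
  { split; destruct (Req_dec x0 a), (Req_dec x0 b); subst; try lra; unfold M in HM;
    try rewrite Ga in HM; try rewrite Gb in HM; lra. }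
  set (r := Rmin (x0 - a) (b - x0)).
  assert (Hr : 0 < r) by (unfold r; apply Rmin_case; lra).
  assert (Hra : a <= x0 - r) by (unfold r; generalize (Rmin_l (x0 - a) (b - x0)); lra).
  assert (Hrb : x0 + r <= b) by (unfold r; generalize (Rmin_r (x0 - a) (b - x0)); lra).
  assert (Em : forall t, 0 < t <= r -> mean f (x0 - t) (x0 + t) = mean G (x0 - t) (x0 + t) + (A + beta * x0)).
  { intros t Ht. unfold mean.
    rewrite (RInt_ext f (fun u => G u + (A + beta * u))).
    2: { intros x Hx. rewrite Rmin_left in Hx by lra. rewrite Rmax_right in Hx by lra.
         unfold G. rewrite cl_id by lra. match goal with |- ?x = ?y => change (x = y :> R) end; ring. }
    rewrite (RInt_plus (V:=R_CompleteNormedModule) G (fun u => A + beta * u)).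
    2: apply (ex_RInt_continuous (V:=R_CompleteNormedModule)); auto.
    2: apply (ex_RInt_continuous (V:=R_CompleteNormedModule)); intros;
       apply (@ex_derive_continuous R_AbsRing R_NormedModule); auto_derive; auto.
    change (plus (RInt G (x0 - t) (x0 + t)) (RInt (fun u => A + beta * u) (x0 - t) (x0 + t)))
      with (RInt G (x0 - t) (x0 + t) + RInt (fun u => A + beta * u) (x0 - t) (x0 + t)).
    rewrite affine_mean by lra.
    replace (x0 + t - (x0 - t)) with (2 * t) by ring. field. lra. }
  assert (Hyp' : forall s, 0 < s <= r -> mean G (x0 - r) (x0 + r) >= mean G (x0 - s) (x0 + s)).
  { intros s Hs. assert (H := Hyp x0 r s (proj1 Hs) (proj2 Hs)).
    rewrite !Em in H by lra. apply Rplus_ge_reg_r with (A + beta * x0). apply H.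
    apply (HI a _ b); auto; lra. apply (HI a _ b); auto; lra. }
  assert (Hup : mean G (x0 - r) (x0 + r) < M).
  { unfold mean. replace (x0 + r - (x0 - r)) with (2 * r) by ring.
    assert (Hle : forall u, a <= u <= b -> G u <= M) by (intros; apply Hmax; auto).
    assert (HM2 : 0 < M / 2) by lra.
    apply (Rmult_lt_reg_r (2 * r)); [lra|].
    unfold Rdiv. rewrite Rmult_assoc, Rinv_l, Rmult_1_r by lra.
    destruct (Req_dec (x0 - r) a) as [Ea | Ea].
    - destruct (cont_eps G a (M / 2) (HG a) HM2) as [d [Hd Hdd]].
      set (e := Rmin (d / 2) r).
      assert (He : 0 < e <= r /\ e < d).
      { unfold e; split; [split|]; [apply Rmin_case; lra | apply Rmin_r |].
        generalize (Rmin_l (d / 2) r); lra. }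
      assert (Hb := split_bound G (x0 - r) (x0 - r + e) (x0 + r) (M / 2) M HG).
      assert (RInt G (x0 - r) (x0 + r) <= M / 2 * (x0 - r + e - (x0 - r)) + M * (x0 + r - (x0 - r + e))).
      { apply Hb. lra.
        - intros u Hu. assert (Rabs (G u - G a) < M / 2) by (apply Hdd; rewrite Rabs_right; lra).
          rewrite Ga in H. apply Rabs_def2 in H. lra.
        - intros u Hu. apply Hle. lra. }
      assert (0 < M * e) by (apply Rmult_lt_0_compat; lra). lra.
    - assert (Eb : x0 + r = b) by (revert Ea; unfold r, Rmin; destruct Rle_dec; intros; lra).
      destruct (cont_eps G b (M / 2) (HG b) HM2) as [d [Hd Hdd]].
      set (e := Rmin (d / 2) r).
      assert (He : 0 < e <= r /\ e < d).
      { unfold e; split; [split|]; [apply Rmin_case; lra | apply Rmin_r |].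
        generalize (Rmin_l (d / 2) r); lra. }
      assert (Hb := split_bound G (x0 - r) (x0 + r - e) (x0 + r) M (M / 2) HG).
      assert (RInt G (x0 - r) (x0 + r) <= M * (x0 + r - e - (x0 - r)) + M / 2 * (x0 + r - (x0 + r - e))).
      { apply Hb. lra.
        - intros u Hu. apply Hle. lra.
        - intros u Hu. assert (Rabs (G u - G b) < M / 2) by (apply Hdd; rewrite Rabs_left1; lra).
          rewrite Gb in H. apply Rabs_def2 in H. lra. }
      assert (0 < M * e) by (apply Rmult_lt_0_compat; lra). lra. }
  set (mr := mean G (x0 - r) (x0 + r)) in *.
  set (eps := (M - mr) / 2).
  assert (Heps : 0 < eps) by (unfold eps; lra).
  destruct (cont_eps G x0 eps (HG x0) Heps) as [d [Hd Hdd]].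
  set (s := Rmin (d / 2) r).
  assert (Hs : 0 < s <= r /\ s < d).
  { unfold s; split; [split|]; [apply Rmin_case; lra | apply Rmin_r |].
    generalize (Rmin_l (d / 2) r); lra. }
  assert (Hlow : (M - eps) * (x0 + s - (x0 - s)) <= RInt G (x0 - s) (x0 + s)).
  { apply lower_bound; auto; try lra. intros u Hu.
    assert (Rabs (G u - G x0) < eps) by (apply Hdd; apply Rabs_def1; lra).
    apply Rabs_def2 in H. unfold M. lra. }
  assert (Hms : M - eps <= mean G (x0 - s) (x0 + s)).
  { unfold mean. replace (x0 + s - (x0 - s)) with (2 * s) in * by ring.
    apply (Rmult_le_reg_r (2 * s)); [lra|].
    unfold Rdiv. rewrite Rmult_assoc, Rinv_l, Rmult_1_r by lra. lra. }
  specialize (Hyp' s (proj1 Hs)). unfold eps in Hms. lra.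
Qed.

Theorem theorem3 (I : R -> Prop) (f : R -> R) :
  is_interval I -> continuous_on_set I f ->
  (convex_on I f <->
   (forall c r s, 0 < s -> s <= r -> I (c - r) -> I (c + r) ->
      mean f (c - r) (c + r) >= mean f (c - s) (c + s))).
Proof.
  intros HI Hf. split.
  - intros Hc c r s Hs Hsr Ip Iq. apply fwd with I; auto.
  - intros Hyp x y t Ix Iy Ht.
    destruct (Rtotal_order x y) as [Hxy | [Hxy | Hxy]].
    + assert (Hz : x <= t * x + (1 - t) * y <= y) by (split; nra).
      assert (H := bwd_core I f x y HI Hf Hyp Hxy Ix Iy _ Hz).
      replace (f x + (f y - f x) / (y - x) * (t * x + (1 - t) * y - x))
        with (t * f x + (1 - t) * f y) in H by (field; lra). exact H.
    + subst. replace (t * y + (1 - t) * y) with y by ring.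
      replace (t * f y + (1 - t) * f y) with (f y) by ring. lra.
    + assert (Hz : y <= t * x + (1 - t) * y <= x) by (split; nra).
      assert (H := bwd_core I f y x HI Hf Hyp Hxy Iy Ix _ Hz).
      replace (f y + (f x - f y) / (x - y) * (t * x + (1 - t) * y - y))
        with (t * f x + (1 - t) * f y) in H by (field; lra). exact H.
Qed.
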